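(* Consider an $N$-player discounted stochastic game with finite stage space $\mathcal{S}$, finite action sets $\mathcal{X}_i(s)$ for player $i$ at stage $s$, transition probabilities $\mathbb{P}(s'\mid s,\mathbf{x})$, discount factor $\gamma\in(0,1)$, and polymatrix stage payoffs $M_i(\mathbf{x},s)=\sum_{j\in[N],j\ne i}x_i(s)^TA^{ij}(s)x_j(s)$, where each $A^{ij}(s)$ is only known to lie in an uncertainty set $\mathcal{U}^{ij}(s)$. Form the associated agent game, and suppose the agent game has an ex-post equilibrium $(a^*(i,s))_{i\in[N],s\in\mathcal{S}}$. Define $x_i^*(s)=a^*(i,s)$ for each player $i$ and stage $s$. Then $(x_i^*(s))_{i\in[N],s\in\mathcal{S}}$ is an ex-post Markov perfect equilibrium (ex-post MPE) of the stochastic game.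
   Context: In the stochastic game, play starts at an initial stage $s^0$; at each time $t$ all players simultaneously choose (possibly mixed) actions, where player $i$'s action $x_i(s^t,\mathcal{H}^t)\in\mathcal{X}_i(s^t)$ may depend on the history $\mathcal{H}^t$ of past stages and actions; stage payoffs are realized and the next stage is drawn from $\mathbb{P}(\cdot\mid s^t,\mathbf{x})$. (Mixed actions at stage $s$ are identified with probability vectors over $\mathcal{X}_i(s)$, and $x_i(s)^TA^{ij}(s)x_j(s)$ is the expected stage payoff.) Player $i$'s expected discounted payoff from initial stage $s^0$ is $\Pi_i(x_1,\dots,x_N;s^0)=\mathbb{E}\big[\sum_{t=0}^\infty\gamma^tM_i(x_1(s^t,\mathcal{H}^t),\dots,x_N(s^t,\mathcal{H}^t);s^t)\big]$. A Markov strategy depends only on the current stage, written $x_i(s)$. A profile of Markov strategies $(x_1^*(s),\dots,x_N^*(s))$ is an ex-post MPE if for every choice of payoff matrices $A^{ij}(s)\in\mathcal{U}^{ij}(s)$ (all $i,j\in[N]$, $s\in\mathcal{S}$), every player $i$ and every initial stage $s$, the strategy $x_i^*$ maximizes $\Pi_i(x_i,x_{-i}^*;s)$ over player $i$'s strategies, given the others play $x_{-i}^*$. The agent game is the one-shot game with one player (''agent'') $(i,s)$ for each $i\in[N]$, $s\in\mathcal{S}$, whose action set is $\mathcal{X}_i(s)$; for an action profile $\mathbf{a}=(a(i,s))_{i,s}$ the payoff to agent $(i,s)$ is $Q_{i,s}(\mathbf{a})=\mathbb{E}\big[\sum_{t=0}^\infty\gamma^tM_i(a(1,s^t),\dots,a(N,s^t);s^t)\mid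 s^0=s\big]$, which depends on the uncertain matrices $A^{ij}(\cdot)$. An ex-post equilibrium of the agent game is a profile $\mathbf{a}^*$ such that for every agent $(i,s)$ and every choice of $A^{ij}(s')\in\mathcal{U}^{ij}(s')$ for all $i,j,s'$, $a^*(i,s)$ maximizes $Q_{i,s}(a(i,s),\mathbf{a}^*_{-(i,s)})$ over $a(i,s)$. *)

(* Defs.v *)
From HB Require Import structures.
From mathcomp Require Import all_boot all_order all_algebra.
From mathcomp Require Import all_classical all_reals topology normedtype sequences.
Unset Printing Implicit Defensive.
Import Order.TTheory GRing.Theory Num.Theory numFieldNormedType.Exports.
Local Open Scope ring_scope.

Section StochGame.
Variable R : realType.
Variable N : nat.
Variable S : finType.
Variable A : 'I_N -> S -> finType.

Definition prof (s : S) := {dffun forall i : 'I_N, A i s}.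

Definition is_mixed (i : 'I_N) (s : S) (p : {ffun A i s -> R}) : Prop :=
  (forall a, 0 <= p a) /\ \sum_a p a = 1.

Definition hist_entry := {s : S & prof s}.

Definition strategy (i : 'I_N) := seq hist_entry -> forall s : S, {ffun A i s -> R}.

Definition is_strategy (i : 'I_N) (x : strategy i) : Prop :=
  forall h s, is_mixed i s (x h s).

Definition markov (i : 'I_N) := forall s : S, {ffun A i s -> R}.

Definition is_markov (i : 'I_N) (x : markov i) : Prop := forall s, is_mixed i s (x s).

Definition of_markov (i : 'I_N) (x : markov i) : strategy i := fun _ s => x s.

Definition is_kernel (P : forall s : S, prof s -> S -> R) : Prop :=
  forall s b, (forall s', 0 <= P s b s') /\ \sum_s' P s b s' = 1.

Definition payoffs := forall (i j : 'I_N) (s : S), A i s -> A j s -> R.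

Definition uncertainty := forall (i j : 'I_N) (s : S), (A i s -> A j s -> R) -> Prop.

Definition admissible (U : uncertainty) (M : payoffs) : Prop :=
  forall i j s, i != j -> U i j s (M i j s).

(* polymatrix stage payoff of player i at stage s for a pure profile b;
   its expectation under independent mixed actions x is
   sum_{j<>i} x_i(s)^T A^{ij}(s) x_j(s) *)
Definition stage_payoff (M : payoffs) (i : 'I_N) (s : S) (b : prof s) : R :=
  \sum_(j < N | j != i) M i j s (b i) (b j).

Variable P : forall s : S, prof s -> S -> R.
Variable gamma : R.

Fixpoint value_fin (M : payoffs) (i : 'I_N) (x : forall k, strategy k)
    (T : nat) (h : seq hist_entry) (s : S) : R :=
  match T with
  | 0 => 0
  | T'.+1 =>
    \sum_(b : prof s) (\prod_(k < N) x k h s (b k)) *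
      (stage_payoff M i s b +
       gamma * \sum_(s' : S) P s b s' *
                 value_fin M i x T' (rcons h (@Tagged S s (fun s0 => prof s0) b)) s')
  end.

(* Pi_i(x; s0) = E[ sum_{t>=0} gamma^t M_i(...) ] as the limit of the
   partial sums over the first T periods *)
Definition disc_payoff (M : payoffs) (i : 'I_N) (x : forall k, strategy k) (s0 : S) : R :=
  limn (fun T => value_fin M i x T [::] s0).

Definition ex_post_MPE (U : uncertainty) (xs : forall k, markov k) : Prop :=
  (forall k, is_markov k (xs k)) /\
  forall M : payoffs, admissible U M ->
  forall (i : 'I_N) (s : S) (y : forall k, strategy k),
    is_strategy i (y i) ->
    (forall k, k != i -> forall h s', y k h s' = xs k s') ->
    disc_payoff M i y s <= disc_payoff M i (fun k => of_markov k (xs k)) s.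

(* agent game: agent (i,s) chooses a(i,s) in X_i(s) (mixed actions) *)
Definition agent_profile := forall (i : 'I_N) (s : S), {ffun A i s -> R}.

Definition agent_payoff (M : payoffs) (a : agent_profile) (i : 'I_N) (s : S) : R :=
  disc_payoff M i (fun k => of_markov k (a k)) s.

Definition ex_post_agent_eq (U : uncertainty) (a : agent_profile) : Prop :=
  (forall i s, is_mixed i s (a i s)) /\
  forall M : payoffs, admissible U M ->
  forall (i : 'I_N) (s : S) (b : agent_profile),
    is_mixed i s (b i s) ->
    (forall i' s', (i' != i) || (s' != s) -> b i' s' = a i' s') ->
    agent_payoff M b i s <= agent_payoff M a i s.

End StochGame.

(* Main.v *)
Require Import Defs.
From HB Require Import structures.
From mathcomp Require Import all_boot all_order all_algebra.
From mathcomp Require Import all_classical all_reals topology normedtype sequences.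
From mathcomp Require Import ring lra.
Import Order.TTheory GRing.Theory Num.Theory numFieldNormedType.Exports.
Local Open Scope classical_set_scope.
Local Open Scope ring_scope.

Lemma prod_sum_dffun (R : comNzRingType) (I : finType) (T : I -> finType)
  (f : forall i, T i -> R) :
  \prod_i \sum_(a : T i) f i a =
  \sum_(b : {dffun forall i, T i}) \prod_i f i (b i).
Proof.
have E i : \sum_(a : T i) f i a =
   \sum_(j | j \in tagged_with T i) f (tag j) (tagged j).
  have -> : \sum_(a : T i) f i a = \sum_(i' | i' == i) \sum_(a : T i') f i' a.
    by rewrite big_pred1_eq.
  rewrite (sig_big_dep (fun i' => i' == i) (fun i' _ => true)
           (fun i' a => f i' a)).
  by apply: eq_bigl => j; rewrite andbT.
rewrite (eq_bigr _ (fun i _ => E i)) bigA_distr_big_dep.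
pose h (b : {dffun forall i, T i}) : {ffun I -> {i : I & T i}} :=
  [ffun i => Tagged T (b i)].
pose h' (g : {ffun I -> {i : I & T i}}) : option {dffun forall i, T i} :=
  if insub g is Some u then Some (dffun_of_fprod (of_family_tagged_with
     (u : {x in family (tagged_with T)}))) else None.
rewrite (reindex_omap h h').
  apply: eq_big => b.
    have hb : h b \in family (tagged_with T).
      by apply/familyP => i; rewrite /h ffunE inE.
    rewrite hb /= /h' insubT /=; apply/eqP; congr Some.
    apply/ffunP => i; rewrite ffunE.
    have -> : of_family_tagged_with (Sub (h b) hb) = fprod_of_fun b.
      by apply: val_inj.
    by rewrite fprodE.
  by move=> _; apply: eq_bigr => i _; rewrite /h ffunE.
move=> g gP; rewrite /h' insubT /=; congr Some.
apply/ffunP => i; rewrite /h !ffunE.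
by rewrite etaggedK.
Qed.

Section An.
Variable R : realType.

Lemma geo_small (g e : R) : 0 <= g -> g < 1 -> 0 < e -> exists n : nat, g ^+ n < e.
Proof.
move=> g0 g1 e0.
have : `|g| < 1 by rewrite ger0_norm.
move=> /cvg_expr /cvgr_dist_lt /(_ e e0) [n _ Hn].
exists n; have := Hn n (leqnn n).
by rewrite sub0r normrN ger0_norm ?exprn_ge0.
Qed.

Lemma geo_cvg (u : nat -> R) (c g : R) : 0 <= c -> 0 <= g -> g < 1 ->
  (forall n, `|u n.+1 - u n| <= c * g ^+ n) ->
  cvgn u /\ forall n, `|u n - limn u| <= c * g ^+ n / (1 - g).
Proof.
move=> c0 g0 g1 du.
have g1' : 0 < 1 - g by rewrite subr_gt0.
have tel n k : `|u (n + k)%N - u n| <= c * (g ^+ n - g ^+ (n + k)) / (1 - g).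
  elim: k => [|k IH]; first by rewrite addn0 subrr normr0 subrr mulr0 mul0r.
  rewrite addnS.
  have := ler_normD (u (n + k).+1 - u (n + k)%N) (u (n + k)%N - u n).
  rewrite addrA subrK => /le_trans; apply.
  have -> : c * (g ^+ n - g ^+ (n + k).+1) / (1 - g) =
     c * g ^+ (n + k) + c * (g ^+ n - g ^+ (n + k)) / (1 - g).
    rewrite exprS; field; by rewrite lt0r_neq0.
  exact: lerD.
have bnd n m : (n <= m)%N -> `|u m - u n| <= c * g ^+ n / (1 - g).
  move=> /subnKC <-; apply: (le_trans (tel n (m - n)%N)).
  rewrite ler_pM2r ?invr_gt0 // ler_wpM2l // lerBlDr lerDl.
  exact: exprn_ge0.
have cv : cvgn u.
  suff : cauchy (u @ \oo) by exact: cauchy_cvg.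
  suff : cauchy_ex (u @ \oo) by exact: cauchy_exP.
  move=> e e0; rewrite /fmapE -ball_normE /ball_.
  have [n Hn] : exists n, c * g ^+ n / (1 - g) < e.
    have e1 : 0 < e * (1 - g) / (c + 1).
      by rewrite divr_gt0 ?mulr_gt0 // ltr_wpDl.
    have [n Hn] := @geo_small g _ g0 g1 e1.
    exists n; rewrite ltr_pdivrMr // (le_lt_trans _ (_ : (c + 1) * g ^+ n < e * (1 - g))) //.
      by rewrite ler_wpM2r ?exprn_ge0 // lerDl.
    by rewrite mulrC -ltr_pdivlMr ?ltr_wpDl.
  exists (u n), n => // m nm /=.
  by rewrite distrC; apply: le_lt_trans (bnd n m nm) Hn.
split => // n.
rewrite distrC ler_distl; apply/andP; split.
  apply: limr_ge => //; near=> m.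
  have := bnd n m; rewrite ler_distl => /(_ _) /andP [] //.
  near: m; exact: nbhs_infty_ge.
apply: limr_le => //; near=> m.
have := bnd n m; rewrite ler_distl => /(_ _) /andP [] //.
near: m; exact: nbhs_infty_ge.
Unshelve. all: by end_near.
Qed.
End An.

Section Main.
Variables (R : realType) (N : nat) (S : finType) (A : 'I_N -> S -> finType).
Variables (P : forall s : S, prof N S A s -> S -> R) (gamma : R).
Hypothesis hP : is_kernel R N S A P.
Hypothesis g0 : 0 < gamma.
Hypothesis g1 : gamma < 1.
Variables (M : payoffs R N S A) (i : 'I_N).

Local Notation strat := (forall k, strategy R N S A k).
Local Notation vf x T h s := (value_fin R N S A P gamma M i x T h s).
Local Notation profs s := (prof N S A s).

Definition good (x : strat) := forall k h s, is_mixed R N S A k s (x k h s).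
Definition pi (x : strat) h s (b : profs s) := \prod_(k < N) x k h s (b k).

Lemma pi_ge0 x h s b : good x -> 0 <= pi x h s b.
Proof. by move=> hx; apply: prodr_ge0 => k _; case: (hx k h s). Qed.

Lemma pi_sum x h s : good x -> \sum_(b : profs s) pi x h s b = 1.
Proof.
move=> hx; rewrite /pi.
rewrite -(@prod_sum_dffun R _ (fun k => A k s) (fun k a => x k h s a)).
by apply: big1 => k _; case: (hx k h s).
Qed.

Lemma le_sum_term (J : finType) (F : J -> R) j :
  (forall j, 0 <= F j) -> F j <= \sum_j F j.
Proof.
move=> F0; rewrite (bigD1 j) //= lerDl; exact: sumr_ge0.
Qed.

Lemma avg_norm (J : finType) (w g : J -> R) c :
  (forall j, 0 <= w j) -> \sum_j w j = 1 -> (forall j, `|g j| <= c) ->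
  `|\sum_j w j * g j| <= c.
Proof.
move=> w0 w1 gc; apply: (le_trans (ler_norm_sum _ _ _)).
apply: (@le_trans _ _ (\sum_j w j * c)).
  by apply: ler_sum => j _; rewrite normrM ger0_norm // ler_wpM2l.
by rewrite -mulr_suml w1 mul1r.
Qed.

Lemma avg_le (J : finType) (w g : J -> R) c :
  (forall j, 0 <= w j) -> \sum_j w j = 1 -> (forall j, g j <= c) ->
  \sum_j w j * g j <= c.
Proof.
move=> w0 w1 gc.
apply: (@le_trans _ _ (\sum_j w j * c)).
  by apply: ler_sum => j _; rewrite ler_wpM2l.
by rewrite -mulr_suml w1 mul1r.
Qed.

Definition step s (w : profs s -> R) (f : profs s -> S -> R) :=
  \sum_(b : profs s) w b * (stage_payoff R N S A M i s b +
     gamma * \sum_(s' : S) P s b s' * f b s').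

Lemma step_ext s w f f' : (forall b s', f b s' = f' b s') ->
  step s w f = step s w f'.
Proof.
move=> ff; apply: eq_bigr => b _; congr (_ * (_ + _ * _)).
by apply: eq_bigr => s' _; rewrite ff.
Qed.

Lemma step_sub s w f f' : step s w f - step s w f' =
  gamma * \sum_b w b * \sum_s' P s b s' * (f b s' - f' b s').
Proof.
rewrite /step -sumrB mulr_sumr; apply: eq_bigr => b _.
rewrite -mulrBr mulrCA; congr (_ * _).
rewrite opprD addrACA subrr add0r -mulrBr -sumrB; congr (_ * _).
by apply: eq_bigr => s' _; rewrite mulrBr.
Qed.

Lemma step_diff s w f f' c : (forall b, 0 <= w b) -> \sum_b w b = 1 ->
  (forall b s', f b s' - f' b s' <= c) -> step s w f - step s w f' <= gamma * c.
Proof.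
move=> w0 w1 fc; rewrite step_sub ler_wpM2l ?(ltW g0) //.
apply: avg_le => // b; case: (hP s b) => P0 P1; exact: avg_le.
Qed.

Lemma step_absdiff s w f f' c : (forall b, 0 <= w b) -> \sum_b w b = 1 ->
  (forall b s', `|f b s' - f' b s'| <= c) -> `|step s w f - step s w f'| <= gamma * c.
Proof.
move=> w0 w1 fc; rewrite ler_norml; apply/andP; split.
  rewrite lerNl opprB; apply: step_diff => // b s'.
  by apply: le_trans (fc b s'); rewrite distrC; exact: ler_norm.
by apply: step_diff => // b s'; apply: le_trans (ler_norm _) (fc b s').
Qed.

Lemma step_mono s w f f' : (forall b, 0 <= w b) -> \sum_b w b = 1 ->
  (forall b s', f b s' <= f' b s') -> step s w f <= step s w f'.
Proof.
move=> w0 w1 ff; rewrite -subr_le0 -(mulr0 gamma); apply: step_diff => // b s'.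
by rewrite subr_le0.
Qed.

Lemma vf_succ x T h s : vf x T.+1 h s =
  step s (pi x h s) (fun b s' =>
     vf x T (rcons h (@Tagged S s (fun s0 => prof N S A s0) b)) s').
Proof. by []. Qed.

Definition Bd := \sum_(s : S) \sum_(b : profs s) `|stage_payoff R N S A M i s b|.

Lemma Bd_ge0 : 0 <= Bd.
Proof. by apply: sumr_ge0 => s _; apply: sumr_ge0. Qed.

Lemma stage_le s b : `|stage_payoff R N S A M i s b| <= Bd.
Proof.
apply: (@le_trans _ _ (\sum_(b : profs s) `|stage_payoff R N S A M i s b|)).
  by apply: (le_sum_term _ (fun b => `|stage_payoff R N S A M i s b|) b).
apply: (le_sum_term _ (fun s => \sum_(b : profs s) `|stage_payoff R N S A M i s b|) s).
by move=> s'; apply: sumr_ge0.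
Qed.

Lemma vf_cauchy x : good x -> forall T h s,
  `|vf x T.+1 h s - vf x T h s| <= Bd * gamma ^+ T.
Proof.
move=> hx; elim=> [|T IH] h s.
  rewrite /= subr0 expr0 mulr1; apply: avg_norm.
  - by move=> b; apply: pi_ge0.
  - exact: pi_sum.
  by move=> b; rewrite big1 ?mulr0 ?addr0 ?stage_le // => s' _; rewrite mulr0.
rewrite [vf x T.+2 h s]vf_succ [vf x T.+1 h s]vf_succ exprS mulrCA.
apply: step_absdiff.
- by move=> b; apply: pi_ge0.
- exact: pi_sum.
by move=> b s'; apply: IH.
Qed.

Lemma vf_lim x h s : good x ->
  cvgn (fun T => vf x T h s) /\
  forall T, `|vf x T h s - limn (fun T => vf x T h s)| <= Bd * gamma ^+ T / (1 - gamma).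
Proof.
move=> hx; apply: geo_cvg; [exact: Bd_ge0 | exact: ltW | exact: g1 |].
by move=> n; apply: vf_cauchy.
Qed.

Definition xs (a : agent_profile R N S A) : strat := fun k => of_markov R N S A k (a k).
Definition goodA (a : agent_profile R N S A) := forall k s, is_mixed R N S A k s (a k s).

Lemma goodA_good a : goodA a -> good (xs a).
Proof. by move=> ha k h s; apply: ha. Qed.

Lemma vf_markov a T h s : vf (xs a) T h s = vf (xs a) T [::] s.
Proof.
elim: T h s => [//|T IH] h s; rewrite !vf_succ.
apply: eq_bigr => b _; congr (_ * (_ + _ * _)); apply: eq_bigr => s' _.
by rewrite (IH (rcons h _)) (IH (rcons [::] _)).
Qed.

Definition W a T s := vf (xs a) T [::] s.
Definition V a s := disc_payoff R N S A P gamma M i (xs a) s.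
Definition Tb a (f : S -> R) s := step s (pi (xs a) [::] s) (fun _ s' => f s').

Lemma W_succ a T s : W a T.+1 s = Tb a (W a T) s.
Proof. by rewrite /W vf_succ; apply: step_ext => b s'; exact: vf_markov. Qed.

Lemma V_bound a : goodA a -> forall T s,
  `|W a T s - V a s| <= Bd * gamma ^+ T / (1 - gamma).
Proof. by move=> ha T s; have [_ ] := vf_lim (xs a) [::] s (goodA_good a ha); apply. Qed.

Lemma le_geo z K : (forall T, z <= K * gamma ^+ T) -> z <= 0.
Proof.
move=> hz; rewrite leNgt; apply/negP => z0.
have K1 : 0 < `|K| + 1 by rewrite ltr_wpDl.
have e0 : 0 < z / (`|K| + 1) by rewrite divr_gt0.
have [T hT] := @geo_small R gamma _ (ltW g0) g1 e0.
have := hz T; apply/negP; rewrite -ltNge.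
apply: (@le_lt_trans _ _ ((`|K| + 1) * gamma ^+ T)).
  rewrite ler_wpM2r ?exprn_ge0 ?(ltW g0) //.
  by apply: le_trans (ler_norm K) _; rewrite lerDl.
by rewrite mulrC -ltr_pdivlMr.
Qed.

Lemma step_wext s w w' f : (forall b, w b = w' b) -> step s w f = step s w' f.
Proof. by move=> ww; apply: eq_bigr => b _; rewrite ww. Qed.

Lemma bellman_eq a : goodA a -> forall s, V a s = Tb a (V a) s.
Proof.
move=> ha s; apply/eqP; rewrite -subr_eq0 -normr_le0.
apply: (@le_geo _ (2 * Bd * gamma / (1 - gamma))) => T.
have g1' : 1 - gamma != 0 by rewrite subr_eq0 eq_sym lt_eqF.
have h1 := V_bound a ha T.+1 s.
have h2 : `|Tb a (W a T) s - Tb a (V a) s| <= gamma * (Bd * gamma ^+ T / (1 - gamma)).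
  apply: step_absdiff => //; first by move=> b; apply: pi_ge0; apply: goodA_good.
    by apply: pi_sum; apply: goodA_good.
  by move=> _ s'; apply: V_bound.
have -> : V a s - Tb a (V a) s = - (W a T.+1 s - V a s) + (Tb a (W a T) s - Tb a (V a) s).
  by rewrite W_succ; ring.
apply: le_trans (ler_normD _ _) _; rewrite normrN.
apply: le_trans (lerD h1 h2) _; rewrite le_eqVlt; apply/orP; left; apply/eqP.
by rewrite exprS; field.
Qed.

Definition Ka a := \sum_(s : S) `|V a s|.

Lemma Ka_le a s : `|V a s| <= Ka a.
Proof. by apply: (le_sum_term _ (fun s => `|V a s|)) => s'. Qed.

Lemma bellman_ineq a b s : goodA a -> goodA b ->
  (forall k s', (k != i) || (s' != s) -> b k s' = a k s') ->
  V b s <= V a s -> Tb b (V a) s <= V a s.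
Proof.
move=> ha hb hab hV; rewrite leNgt; apply/negP => hlt.
have wb0 s' bb : 0 <= pi (xs b) [::] s' bb by apply: pi_ge0; apply: goodA_good.
have wb1 s' : \sum_bb pi (xs b) [::] s' bb = 1 by apply: pi_sum; apply: goodA_good.
have base s' : V a s' <= Tb b (V a) s'.
  case: (eqVneq s' s) => [->|ne]; first exact: ltW.
  have -> : Tb b (V a) s' = Tb a (V a) s'.
    apply: step_wext => bb; apply: eq_bigr => k _.
    by rewrite /xs /of_markov hab // ne orbT.
  by rewrite -bellman_eq.
have Uge n s' : V a s' <= iter n (Tb b) (V a) s'.
  elim: n s' => [//|n IH] s'; rewrite iterS.
  apply: le_trans (base s') _; apply: step_mono => // _ s''; exact: IH.
have Udist n s' : `|iter n (Tb b) (V a) s' - W b n s'| <= Ka a * gamma ^+ n.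
  elim: n s' => [|n IH] s'; first by rewrite /W /= subr0 expr0 mulr1 Ka_le.
  rewrite iterS W_succ exprS mulrCA; apply: step_absdiff => // _ s''; exact: IH.
set D := Tb b (V a) s - V a s.
have D0 : 0 < D by rewrite subr_gt0.
have : D <= 0.
  apply: (@le_geo _ ((Ka a + Bd / (1 - gamma)) * gamma)) => n.
  have h1 := V_bound b hb n.+1 s.
  have h2 := Udist n.+1 s.
  have h3 : Tb b (V a) s <= iter n.+1 (Tb b) (V a) s.
    rewrite iterS; apply: step_mono => // _ s''; exact: Uge.
  have e1 := ler_norm (W b n.+1 s - V b s).
  have e2 := ler_norm (iter n.+1 (Tb b) (V a) s - W b n.+1 s).
  have -> : (Ka a + Bd / (1 - gamma)) * gamma * gamma ^+ n =
     Ka a * gamma ^+ n.+1 + Bd * gamma ^+ n.+1 / (1 - gamma).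
    by rewrite exprS; field; rewrite subr_eq0 eq_sym lt_eqF.
  rewrite /D; move: h1 h2 h3 e1 e2 hV.
  set x1 := W b n.+1 s; set x2 := V b s; set x3 := iter _ _ _ s.
  set c1 := Bd * _ / _; set c2 := Ka a * _.
  move=> h1 h2 h3 e1 e2 hV'; lra.
by rewrite leNgt D0.
Qed.

Definition upd (a : agent_profile R N S A) (s : S) (p : {ffun A i s -> R}) :
    agent_profile R N S A :=
  @eqtype.dfwith 'I_N (fun k => forall s', {ffun A k s' -> R}) a i
    (@eqtype.dfwith S (fun s' => {ffun A i s' -> R}) (a i) s p).

Lemma upd_in a s p : upd a s p i s = p.
Proof. by rewrite /upd !dfwith_in. Qed.

Lemma upd_out a s p k s' : (k != i) || (s' != s) -> upd a s p k s' = a k s'.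
Proof.
rewrite /upd; case: (eqVneq i k) => [<-|ik] /=.
  by move=> ne; rewrite dfwith_in dfwith_out // eq_sym.
by move=> _; rewrite dfwith_out.
Qed.

Lemma upd_good a s p : goodA a -> is_mixed R N S A i s p -> goodA (upd a s p).
Proof.
move=> ha hp k s'; case: (boolP ((k != i) || (s' != s))) => [H|].
  by rewrite upd_out.
by rewrite negb_or !negbK => /andP[/eqP-> /eqP->]; rewrite upd_in.
Qed.

Section Dev.
Variable astar : agent_profile R N S A.
Hypothesis hA : goodA astar.
Hypothesis hE : forall s0 (b : agent_profile R N S A), is_mixed R N S A i s0 (b i s0) ->
  (forall i' s', (i' != i) || (s' != s0) -> b i' s' = astar i' s') ->
  V b s0 <= V astar s0.
Variable y : strat.
Hypothesis hy : is_strategy R N S A i (y i).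
Hypothesis hoth : forall k, k != i -> forall h s', y k h s' = astar k s'.

Lemma y_good : good y.
Proof.
move=> k h s; case: (eqVneq k i) => [->|ki]; first exact: hy.
by rewrite hoth //; apply: hA.
Qed.

Lemma bellman_all h s :
  step s (pi y h s) (fun _ s' => V astar s') <= V astar s.
Proof.
pose b := upd astar s (y i h s).
have hb : goodA b by apply: upd_good => //; apply: hy.
have -> : step s (pi y h s) (fun _ s' => V astar s') = Tb b (V astar) s.
  apply: step_wext => bb; apply: eq_bigr => k _; rewrite /xs /of_markov /b.
  case: (eqVneq k i) => [->|ki]; first by rewrite upd_in.
  by rewrite upd_out ?ki // hoth.
apply: bellman_ineq => //.
  by move=> k s'; apply: upd_out.
apply: hE; first by rewrite /b upd_in; apply: hy.
by move=> k s'; apply: upd_out.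
Qed.

Lemma dev_bound T h s : vf y T h s <= V astar s + Ka astar * gamma ^+ T.
Proof.
elim: T h s => [|T IH] h s.
  rewrite /= expr0 mulr1; have := Ka_le astar s; rewrite ler_norml => /andP[hh _].
  by rewrite -lerBlDr sub0r.
rewrite vf_succ.
have := @step_diff s (pi y h s)
  (fun b s' => vf y T (rcons h (@Tagged S s (fun s0 => prof N S A s0) b)) s')
  (fun _ s' => V astar s') (Ka astar * gamma ^+ T).
move=> /(_ (fun b => pi_ge0 y h s b y_good) (pi_sum y h s y_good)).
have H : forall b s', vf y T (rcons h (@Tagged S s (fun s0 => prof N S A s0) b)) s'
   - V astar s' <= Ka astar * gamma ^+ T.
  by move=> b s'; rewrite lerBlDl IH.
move=> /(_ H); have := bellman_all h s.
set u1 := step _ _ _; set u2 := step _ _ _.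
rewrite exprS mulrCA; set c := gamma * _; move=> h1 h2; lra.
Qed.

Lemma dev_final s :
  disc_payoff R N S A P gamma M i y s <= V astar s.
Proof.
rewrite -subr_le0; apply: (@le_geo _ (Ka astar + Bd / (1 - gamma))) => T.
have [_ h1] := vf_lim y [::] s y_good.
have h2 := dev_bound T [::] s.
have e1 := ler_norm (limn (fun T => vf y T [::] s) - vf y T [::] s).
rewrite distrC in e1.
have h1' := h1 T.
rewrite /disc_payoff mulrDl.
have -> : Bd / (1 - gamma) * gamma ^+ T = Bd * gamma ^+ T / (1 - gamma).
  by rewrite mulrAC.
move: h1' h2 e1; set L := limn _; set v := vf y T [::] s.
set c1 := Bd * _ / _; set c2 := Ka astar * _; move=> *; lra.
Qed.

End Dev.

End Main.

Theorem theorem2 (R : realType) (N : nat) (S : finType) (A : 'I_N -> S -> finType)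
    (P : forall s : S, prof N S A s -> S -> R) (gamma : R)
    (U : uncertainty R N S A) (astar : agent_profile R N S A) :
  is_kernel R N S A P -> 0 < gamma < 1 ->
  ex_post_agent_eq R N S A P gamma U astar ->
  ex_post_MPE R N S A P gamma U (fun i s => astar i s).
Proof.
move=> hP /andP[g0 g1] [hA hEq]; split; first by move=> k s; apply: hA.
move=> M adm i s y hy hoth.
apply: (@dev_final R N S A P gamma hP g0 g1 M i astar hA _ y hy hoth s).
by move=> s0 b hb hbo; apply: (hEq M adm i s0 b hb hbo).
Qed.
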